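(* Let $X$ be a shift space. For every $n\ge1$ and $m\ge0$, the graph $\mathcal E_n(w)$ is a tree for all $w\in\mathcal L_{\ge m}(X)$ if and only if the graph $\mathcal E_{n+1}(w)$ is a tree for all $w\in\mathcal L_{\ge m}(X)$.
   Context: $A$ is a finite alphabet; a shift space is a closed shift-invariant subset $X\subseteq A^{\mathbb Z}$; $\mathcal L(X)$ is its set of finite factors, $\mathcal L_n(X)=\mathcal L(X)\cap A^n$, $\mathcal L_{\ge n}(X)=\bigcup_{k\ge n}\mathcal L_k(X)$. For $w\in\mathcal L(X)$ and $n\ge1$: $L_n(w)=\{u\in\mathcal L_n(X):uw\in\mathcal L(X)\}$, $R_n(w)=\{v\in\mathcal L_n(X):wv\in\mathcal L(X)\}$, and the extension graph $\mathcal E_n(w)$ is the undirected bipartite graph with vertex set the disjoint union of $L_n(w)$ and $R_n(w)$ and an edge $(u,v)$ iff $uwv\in\mathcal L(X)$. *)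

(* Defs.v *)
From mathcomp Require Import all_boot all_order all_algebra.
Set Implicit Arguments. Unset Strict Implicit. Unset Printing Implicit Defensive.
Import GRing.Theory Num.Theory.

Definition config (A : finType) := int -> A.

Definition shift (A : finType) (x : config A) : config A := fun i => x (i + 1)%R.

Definition factor_at (A : finType) (x : config A) (i : int) (k : nat) : seq A :=
  [seq x (i + (j%:Z))%R | j <- iota 0 k].

(* X is closed in the product topology: a configuration all of whose central
   windows [-N,N] agree with some point of X belongs to X. *)
Definition closed_set (A : finType) (X : config A -> Prop) : Prop :=
  forall x : config A,
    (forall N : nat, exists y, X y /\
       forall i : int, (- (N%:Z) <= i)%R -> (i <= N%:Z)%R -> y i = x i) ->
    X x.

Definition shift_invariant (A : finType) (X : config A -> Prop) : Prop :=
  forall x : config A, X x <-> X (shift x).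

Definition shift_space (A : finType) (X : config A -> Prop) : Prop :=
  closed_set X /\ shift_invariant X.

Definition lang (A : finType) (X : config A -> Prop) (w : seq A) : Prop :=
  exists x, X x /\ exists i : int, w = factor_at x i (size w).

Definition Lext (A : finType) (X : config A -> Prop) (n : nat) (w u : seq A) : Prop :=
  size u = n /\ lang X u /\ lang X (u ++ w).
Definition Rext (A : finType) (X : config A -> Prop) (n : nat) (w v : seq A) : Prop :=
  size v = n /\ lang X v /\ lang X (w ++ v).

(* Extension graph E_n(w): vertices are the disjoint union (inl u | u in L_n(w))
   and (inr v | v in R_n(w)); undirected edges {u,v} iff uwv in L(X). *)
Definition ext_vertex (A : finType) (X : config A -> Prop) (n : nat) (w : seq A)
  (z : seq A + seq A) : Prop :=
  match z with inl u => Lext X n w u | inr v => Rext X n w v end.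

Definition ext_edge (A : finType) (X : config A -> Prop) (n : nat) (w : seq A)
  (z1 z2 : seq A + seq A) : Prop :=
  match z1, z2 with
  | inl u, inr v => Lext X n w u /\ Rext X n w v /\ lang X (u ++ w ++ v)
  | inr v, inl u => Lext X n w u /\ Rext X n w v /\ lang X (u ++ w ++ v)
  | _, _ => False
  end.

Fixpoint walk (V : Type) (E : V -> V -> Prop) (x : V) (p : seq V) : Prop :=
  match p with
  | [::] => True
  | y :: p' => E x y /\ walk E y p'
  end.

Definition connected_graph (V : eqType) (P : V -> Prop) (E : V -> V -> Prop) : Prop :=
  forall x y, P x -> P y ->
    exists p : seq V, walk E x p /\ last x p = y /\ (forall z, z \in p -> P z).

Definition acyclic_graph (V : eqType) (P : V -> Prop) (E : V -> V -> Prop) : Prop :=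
  ~ exists (x : V) (p : seq V),
      P x /\ (forall z, z \in p -> P z) /\ uniq (x :: p) /\ 2 <= size p /\
          walk E x p /\ E (last x p) x.

Definition is_tree (V : eqType) (P : V -> Prop) (E : V -> V -> Prop) : Prop :=
  (exists x, P x) /\ connected_graph P E /\ acyclic_graph P E.

Definition ext_graph_is_tree (A : finType) (X : config A -> Prop) (n : nat) (w : seq A) : Prop :=
  @is_tree (seq A + seq A)%type (ext_vertex X n w) (ext_edge X n w).

(* Main.v *)
Require Import Defs.
From mathcomp Require Import all_boot all_order all_algebra.
From mathcomp Require Import zify.
From Stdlib Require Import ClassicalEpsilon FunctionalExtensionality.
Set Implicit Arguments. Unset Strict Implicit. Unset Printing Implicit Defensive.


Section Graph.
Variable V : eqType.

Definition rb (E : V -> V -> Prop) : rel V :=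
  fun x y => if excluded_middle_informative (E x y) then true else false.

Lemma rbP E x y : reflect (E x y) (rb E x y).
Proof. rewrite /rb; case: excluded_middle_informative => h; by constructor. Qed.

Lemma walk_path E x p : walk E x p <-> path (rb E) x p.
Proof.
elim: p x => [|y p IH] x //=; split.
  by case=> h1 /IH h2; rewrite h2 andbT; apply/rbP.
by case/andP=> /rbP h1 /IH; tauto.
Qed.

Definition conn (P : V -> Prop) E x y :=
  exists p, path (rb E) x p /\ last x p = y /\ (forall z, z \in p -> P z).

Lemma connected_iff P E :
  connected_graph P E <-> forall x y, P x -> P y -> conn P E x y.
Proof.
split=> h x y Px Py; have [p [h1 [h2 h3]]] := h x y Px Py; exists p.
  by split=> //; apply/walk_path.
by split=> //; apply/walk_path.
Qed.

Lemma conn_refl P E x : conn P E x x.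
Proof. by exists [::]. Qed.

Lemma conn_step P E x y : E x y -> P y -> conn P E x y.
Proof. move=> h Py; exists [:: y]; split; first by rewrite /= andbT; apply/rbP.
by split=> // z; rewrite inE => /eqP->. Qed.

Lemma conn_trans P E x y z : conn P E x y -> conn P E y z -> conn P E x z.
Proof.
move=> [p [h1 [h2 h3]]] [q [g1 [g2 g3]]]; exists (p ++ q); split.
  by rewrite cat_path h1 h2 g1.
by split; [rewrite last_cat h2 | move=> t; rewrite mem_cat => /orP[/h3|/g3]].
Qed.

Lemma conn_cons P E x y : conn P E x y <->
  (x = y \/ exists t, E x t /\ P t /\ conn P E t y).
Proof.
split.
  case=> [[|t p] [h1 [h2 h3]]]; first by left.
  right; exists t; move: h1 => /= /andP[/rbP h0 h1]; split=> //; split.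
    by apply: h3; rewrite inE eqxx.
  by exists p; split=> //; split=> // z zp; apply: h3; rewrite inE zp orbT.
case=> [->|[t [h0 [Pt h]]]]; first exact: conn_refl.
exact: conn_trans (conn_step h0 Pt) h.
Qed.

Lemma conn_ind P E (Q : V -> Prop) x y : conn P E x y ->
  Q y -> (forall a b, E a b -> P b -> Q b -> Q a) -> Q x.
Proof.
move=> [p [h1 [h2 h3]]] Qy hQ; elim: p x h1 h2 h3 => [|t p IH] x /=.
  by move=> _ ->.
move=> /andP[/rbP h0 h1] h2 h3; apply: (hQ x t h0); first by apply: h3; rewrite inE eqxx.
by apply: IH => // z zp; apply: h3; rewrite inE zp orbT.
Qed.

Lemma conn_sym P E x y : (forall a b, E a b -> E b a) -> P x -> conn P E x y -> conn P E y x.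
Proof.
move=> sym Px c; apply: (conn_ind (Q := fun a => P a -> conn P E y a)) c _ _ Px.
  by move=> _; exact: conn_refl.
by move=> a b hab Pb hb Pa; exact: conn_trans (hb Pb) (conn_step (sym _ _ hab) Pa).
Qed.

Lemma conn_mono P E (P' : V -> Prop) E' (Q : V -> Prop) x y :
  conn P E x y -> Q x -> (forall z, P z -> Q z) ->
  (forall a b, Q a -> Q b -> E a b -> E' a b) -> (forall z, P z -> P' z) ->
  conn P' E' x y.
Proof.
move=> c Qx hPQ hE hP; move: Qx.
apply: (conn_ind (Q := fun a => Q a -> conn P' E' a y)) c _ _.
  by move=> _; exact: conn_refl.
move=> a b hab Pb hb Qa; apply: conn_trans (hb (hPQ _ Pb)).
by apply: conn_step; [apply: hE => //; apply: hPQ | apply: hP].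
Qed.

Definition avoid (E : V -> V -> Prop) a b x y :=
  E x y /\ ~ ((x = a /\ y = b) \/ (x = b /\ y = a)).

Definition acycB (P : V -> Prop) E :=
  forall a b, P a -> P b -> E a b -> ~ conn P (avoid E a b) a b.

Definition treeB (P : V -> Prop) E :=
  (exists x, P x) /\ (forall x y, P x -> P y -> conn P E x y) /\ acycB P E.

Lemma acyclic_iff P E : (forall a b, E a b -> E b a) -> (forall a, ~ E a a) ->
  acyclic_graph P E <-> acycB P E.
Proof.
move=> sym irr; split.
  move=> hac a b Pa Pb Eab [p [h1 [h2 h3]]]; apply: hac.
  case: (shortenP h1) h2 => p' g1 g2 g3 g4.
  have avE : forall s t, avoid E a b s t -> E s t by move=> s t [].
  case: p' g1 g2 g3 g4 => [|c [|d q]] /=.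
  - by move=> _ _ _ abeq; exfalso; apply: (irr a); rewrite {2}abeq.
  - by move=> /andP[/rbP [_ hh] _] _ _ cb; exfalso; apply: hh; left; rewrite cb.
  - move=> g1 g2 g3 g4; exists a, [:: c, d & q]; split=> //; split.
      by move=> z zp; apply: h3; apply: g3.
    split=> //; split=> //; split.
      have g1' : path (rb (avoid E a b)) a [:: c, d & q] := g1.
      apply/walk_path; apply: sub_path g1' => s t /rbP [hst _]; exact/rbP.
    by rewrite /= g4; apply: sym.
move=> hB [x [p [Px [hp [hu [hs [hw hl]]]]]]].
case: p hp hu hs hw hl => [|c [|d q]] //= hp hu _ hw hl.
set b := last d q in hl.
have Pb : P b by apply: hp; rewrite inE mem_last orbT.
apply: (hB x b Px Pb (sym _ _ hl)).
exists [:: c, d & q]; split; last by split=> //.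
move: hu => /= /andP[hx /andP[cdq _]].
move: hx; rewrite inE negb_or => /andP[xc xdq].
rewrite -/(path _ c (d :: q)); apply/andP; split.
  apply/rbP; split; first by case: hw.
  case=> [[_ cb]|[xb _]].
    by move: cdq; rewrite cb /b mem_last.
  by move: xdq; rewrite xb /b mem_last.
have hw' : path (rb E) c (d :: q) by move: hw => [_ hw]; apply/walk_path.
apply: (sub_in_path (P := fun z => z != x)) hw'.
  move=> s t sx tx /rbP est; apply/rbP; split=> //.
  by case=> [[/eqP]|[_ /eqP]]; rewrite ?(negbTE sx) ?(negbTE tx).
apply/allP => z; rewrite inE => /orP[/eqP->|zdq]; first by rewrite eq_sym.
by apply/negP => /eqP zx; move: xdq; rewrite -zx zdq.
Qed.

Lemma is_tree_iff P E : (forall a b, E a b -> E b a) -> (forall a, ~ E a a) ->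
  is_tree P E <-> treeB P E.
Proof.
move=> sym irr; rewrite /is_tree /treeB connected_iff acyclic_iff //.
Qed.

End Graph.


Section Hom.
Variables V1 V2 : eqType.

Lemma conn_hom (P1 : V1 -> Prop) (E1 : V1 -> V1 -> Prop) (P2 : V2 -> Prop) (E2 : V2 -> V2 -> Prop) (f : V1 -> V2) x y :
  (forall z, P1 z -> P2 (f z)) ->
  (forall a b, P1 a -> P1 b -> E1 a b -> E2 (f a) (f b)) ->
  P1 x -> conn P1 E1 x y -> conn P2 E2 (f x) (f y).
Proof.
move=> hP hE Px c; move: Px.
apply: (conn_ind (Q := fun a => P1 a -> conn P2 E2 (f a) (f y))) c _ _.
  by move=> _; exact: conn_refl.
move=> a b hab Pb hb Pa; apply: conn_trans (hb Pb).
by apply: conn_step; [apply: hE | apply: hP].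
Qed.

Lemma acycB_hom (P1 : V1 -> Prop) (E1 : V1 -> V1 -> Prop) (P2 : V2 -> Prop) (E2 : V2 -> V2 -> Prop) (f : V1 -> V2) :
  (forall z, P1 z -> P2 (f z)) ->
  (forall a b, P1 a -> P1 b -> E1 a b -> E2 (f a) (f b)) ->
  (forall a b, P1 a -> P1 b -> f a = f b -> a = b) ->
  acycB P2 E2 -> acycB P1 E1.
Proof.
move=> hP hE hi hac a b Pa Pb Eab c.
apply: (hac (f a) (f b) (hP _ Pa) (hP _ Pb) (hE _ _ Pa Pb Eab)).
apply: (conn_hom (f := f)) c => // s t Ps Pt [hst hn]; split; first exact: hE.
case=> [[/hi h1 /hi h2]|[/hi h1 /hi h2]]; apply: hn; [left|right]; split;
  by [apply: h1 | apply: h2].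
Qed.

End Hom.

Section Hom2.
Variables V1 V2 : eqType.
Variables (P1 : V1 -> Prop) (E1 : V1 -> V1 -> Prop) (P2 : V2 -> Prop) (E2 : V2 -> V2 -> Prop).

Lemma connected_hom (f : V1 -> V2) :
  (forall z, P1 z -> P2 (f z)) ->
  (forall a b, P1 a -> P1 b -> E1 a b -> E2 (f a) (f b)) ->
  (forall z, P2 z -> exists z1, P1 z1 /\ f z1 = z) ->
  (forall x y, P1 x -> P1 y -> conn P1 E1 x y) ->
  (forall x y, P2 x -> P2 y -> conn P2 E2 x y).
Proof.
move=> hP hE hs hc x y /hs [x1 [P1x <-]] /hs [y1 [P1y <-]].
exact: (conn_hom hP hE P1x (hc _ _ P1x P1y)).
Qed.

Lemma treeB_transfer (f : V1 -> V2) (g : V2 -> V1) :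
  (forall z, P1 z -> P2 (f z)) ->
  (forall a b, P1 a -> P1 b -> E1 a b -> E2 (f a) (f b)) ->
  (forall z, P2 z -> exists z1, P1 z1 /\ f z1 = z) ->
  (forall z, P2 z -> P1 (g z)) ->
  (forall a b, P2 a -> P2 b -> E2 a b -> E1 (g a) (g b)) ->
  (forall a b, P2 a -> P2 b -> g a = g b -> a = b) ->
  treeB P1 E1 -> treeB P2 E2.
Proof.
move=> hP hE hs gP gE gi [[x Px] [hc ha]]; split; first by exists (f x); apply: hP.
split; first exact: (connected_hom hP hE hs hc).
exact: (acycB_hom (f := g) gP gE gi ha).
Qed.

End Hom2.

Section Bip.
Variables U W : eqType.

Definition bip (e : U -> W -> Prop) (z1 z2 : U + W) : Prop :=
  match z1, z2 with
  | inl u, inr v => e u v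
  | inr v, inl u => e u v
  | _, _ => False
  end.

Definition sumP (PL : U -> Prop) (PR : W -> Prop) (z : U + W) : Prop :=
  match z with inl u => PL u | inr v => PR v end.

Lemma bip_sym e a b : bip e a b -> bip e b a.
Proof. by case: a => ?; case: b => ?. Qed.

Lemma bip_irr e a : ~ bip e a a.
Proof. by case: a => ? h. Qed.

End Bip.


Lemma avoid_swap (V : eqType) (E : V -> V -> Prop) a b x y :
  avoid E a b x y -> avoid E b a x y.
Proof. by case=> h hn; split=> // hh; apply: hn; tauto. Qed.

Lemma conn_avoid_sym (V : eqType) (P : V -> Prop) (E : V -> V -> Prop) a b :
  (forall x y, E x y -> E y x) -> P b ->
  conn P (avoid E b a) b a -> conn P (avoid E a b) a b.
Proof.
move=> sym Pb c.
have c' : conn P (avoid E b a) a b.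
  apply: conn_sym c => // x y [h hn]; split; first exact: sym.
  by move=> hh; apply: hn; tauto.
apply: (conn_mono (Q := fun _ => True)) c' _ _ _ _ => // s t _ _; exact: avoid_swap.
Qed.

Section Glue.
Variables U W V : eqType.
Variables (PL : U -> Prop) (PR : V -> Prop) (e : U -> V -> Prop).
Variables (PR' : W -> Prop) (e' : U -> W -> Prop) (pi : W -> V).
Hypothesis He : forall u v, e u v -> PL u /\ PR v.
Hypothesis He' : forall u x, e' u x -> PL u /\ PR' x /\ e u (pi x).
Hypothesis HR' : forall x, PR' x -> PR (pi x).
Hypothesis Hsurj : forall v, PR v -> exists x, PR' x /\ pi x = v.

Definition PT v (z : U + W) : Prop :=
  match z with inl u => PL u /\ e u v | inr x => PR' x /\ pi x = v end.
Definition fproj (z : U + W) : U + V :=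
  match z with inl u => inl u | inr x => inr (pi x) end.

Lemma PT_PG' v z : PT v z -> sumP PL PR' z.
Proof. by case: z => ? /= []. Qed.

Lemma connT v y z : conn (PT v) (bip e') y z -> conn (sumP PL PR') (bip e') y z.
Proof.
move=> c; apply: (conn_mono (Q := fun _ => True)) c _ _ _ _ => //; exact: PT_PG'.
Qed.

Lemma PG_fproj z : sumP PL PR' z -> sumP PL PR (fproj z).
Proof. by case: z => //= x /HR'. Qed.

Lemma glue_conn :
  (forall x y, sumP PL PR x -> sumP PL PR y -> conn (sumP PL PR) (bip e) x y) ->
  (forall v, PR v -> forall y z, PT v y -> PT v z -> conn (PT v) (bip e') y z) ->
  forall a b, sumP PL PR' a -> sumP PL PR' b -> conn (sumP PL PR') (bip e') a b.
Proof.
move=> hG hT a b Pa Pb.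
have base : forall z', sumP PL PR' z' -> fproj z' = fproj a ->
    conn (sumP PL PR') (bip e') a z'.
  move=> z' Pz'; case: a Pa => [u|x] Pa; case: z' Pz' => [u'|x'] Pz' //= h.
    by case: h => ->; exact: conn_refl.
  case: h => eqx; apply: connT; apply: (hT (pi x) (HR' Pa)) => //=.
pose Q := fun z : U + V => forall z', sumP PL PR' z' -> fproj z' = z ->
  conn (sumP PL PR') (bip e') a z'.
have c := hG _ _ (PG_fproj Pb) (PG_fproj Pa).
suff : Q (fproj b) by apply.
apply: (conn_ind (Q := Q)) c base _.
case=> [u|v] [u'|v'] //= huv Pb' Qb.
  move=> z' Pz'; case: z' Pz' => [u2|x2] //= Pz' [->].
  have [x [PRx pix]] := Hsurj (He huv).2.
  apply: conn_trans (Qb (inr x) PRx _) _; first by rewrite /= pix.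
  by apply: connT; apply: hT (He huv).2 _ _ _ _ => //=; split=> //; case: (He huv).
move=> z' Pz'; case: z' Pz' => [u2|x2] //= Pz' [pix].
apply: conn_trans (Qb (inl u') Pb' erefl) _.
by apply: connT; apply: hT (He huv).2 _ _ _ _ => //=; split=> //; rewrite -?pix //.
Qed.


Definition PGav v0 (z : U + V) := sumP PL PR z /\ z <> inr v0.

Lemma tree_fact v0 u u' : acycB (sumP PL PR) (bip e) ->
  e u v0 -> e u' v0 -> conn (PGav v0) (bip e) (inl u) (inl u') -> u = u'.
Proof.
move=> hac hu hu' c; case: (eqVneq u u') => // neq; exfalso.
apply: (hac (inl u) (inr v0) (He hu).1 (He hu).2 hu).
apply: (conn_trans (y := inl u')); last first.
  apply: conn_step; last exact: (He hu).2.
  split=> //= -[[[/eqP]] | [] //]; by rewrite eq_sym (negbTE neq).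
apply: (conn_mono (Q := fun z => z <> inr v0)) c _ _ _ _ => //.
- by move=> z [].
- move=> a b Qa Qb hab; split=> // -[[_ bv]|[av _]] //.
- by move=> z [].
Qed.

Lemma excursion v0 u0 x0 : pi x0 = v0 -> acycB (sumP PL PR) (bip e) ->
  forall y, conn (sumP PL PR') (avoid (bip e') (inl u0) (inr x0)) y (inr x0) ->
  sumP PL PR' y ->
  (PT v0 y -> conn (PT v0) (avoid (bip e') (inl u0) (inr x0)) y (inr x0)) /\
  ((forall x, y = inr x -> pi x <> v0) -> forall u, PL u -> e u v0 ->
     conn (PGav v0) (bip e) (inl u) (fproj y) ->
     conn (PT v0) (avoid (bip e') (inl u0) (inr x0)) (inl u) (inr x0)).
Proof.
move=> px0 hac y c.
apply: (conn_ind (Q := fun y => sumP PL PR' y -> _)) c _ _.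
  move=> _; split; first by move=> _; exact: conn_refl.
  by move=> h; exfalso; exact: (h x0 erefl px0).
case=> [u|x] [u'|x'] [hb hn] Pb Qb Pa; rewrite /= in hb Pb Qb Pa; try by case: hb.
  have [_ [_ eux]] := He' hb.
  have [PTb1 PTb2] := Qb Pb.
  have stepT : pi x' = v0 -> conn (PT v0) (avoid (bip e') (inl u0) (inr x0)) (inl u) (inr x0).
    move=> pv; apply: conn_trans (PTb1 _); last by split.
    by apply: conn_step; [split | split].
  split.
    case=> _ euv; case: (eqVneq (pi x') v0) => [pv|pv]; first exact: stepT.
    apply: PTb2 => //; first by move=> x [<-]; apply/eqP.
    apply: conn_step => //=; split; first exact: HR'.
    by move=> [] /eqP; rewrite (negbTE pv).
  move=> _ u1 PLu1 eu1 cu1; case: (eqVneq (pi x') v0) => [pv|pv].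
    have equ : u1 = u by apply: (tree_fact hac eu1 _ cu1); rewrite -pv.
    by rewrite equ; apply: stepT.
  apply: PTb2 => //; first by move=> x [<-]; apply/eqP.
  apply: conn_trans cu1 (conn_step _ _) => //=; split; first exact: HR'.
  by move=> [] /eqP; rewrite (negbTE pv).
have [_ [_ eux]] := He' hb.
have [PTb1 PTb2] := Qb Pb.
split.
  case=> PRx pxv; apply: conn_trans (PTb1 _); last by split=> //; rewrite -pxv.
  by apply: conn_step; [split | split => //; rewrite -pxv].
move=> hx u1 PLu1 eu1 cu1; apply: PTb2 => //.
by apply: conn_trans cu1 (conn_step _ _) => //=.
Qed.

Lemma glue_acyc : acycB (sumP PL PR) (bip e) ->
  (forall v, PR v -> acycB (PT v) (bip e')) -> acycB (sumP PL PR') (bip e').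
Proof.
move=> hac hT.
suff main : forall u0 x0, PL u0 -> PR' x0 -> e' u0 x0 ->
    ~ conn (sumP PL PR') (avoid (bip e') (inl u0) (inr x0)) (inl u0) (inr x0).
  case=> [u0|x0] [u1|x1] //= Pa Pb hab c.
    exact: (main u0 x1 Pa Pb hab c).
  apply: (main u1 x0 Pb Pa hab); apply: conn_avoid_sym => //.
  exact: bip_sym.
move=> u0 x0 PLu0 PRx0 hux c.
have [_ [_ eux]] := He' hux.
have [h1 _] := excursion erefl hac c PLu0.
apply: (hT (pi x0) (HR' PRx0) (inl u0) (inr x0)) (h1 _) => //.
Qed.

Lemma glue_down_conn :
  (forall x y, sumP PL PR' x -> sumP PL PR' y -> conn (sumP PL PR') (bip e') x y) ->
  (forall x y, sumP PL PR x -> sumP PL PR y -> conn (sumP PL PR) (bip e) x y).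
Proof.
apply: (connected_hom (f := fproj)).
- exact: PG_fproj.
- by case=> [u|x] [u'|x'] //= _ _ /He' [_ []].
- case=> [u|v] /=; first by move=> h; exists (inl u).
  by move=> /Hsurj [x [h1 h2]]; exists (inr x); rewrite /= h2.
Qed.

Definition PGl v0 (z : U + W) :=
  sumP PL PR' z /\ (forall x, z = inr x -> pi x <> v0).

Lemma glue_down_acyc : acycB (sumP PL PR') (bip e') ->
  (forall v, PR v -> forall y z, PT v y -> PT v z -> conn (PT v) (bip e') y z) ->
  acycB (sumP PL PR) (bip e).
Proof.
move=> hac hT.
suff main : forall u0 v0, e u0 v0 ->
    ~ conn (sumP PL PR) (avoid (bip e) (inl u0) (inr v0)) (inl u0) (inr v0).
  case=> [u0|v0] [u1|v1] //= Pa Pb hab c.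
    exact: (main u0 v1 hab c).
  apply: (main u1 v0 hab); apply: conn_avoid_sym => //.
  exact: bip_sym.
move=> u0 v0 huv [p [h1 [h2 h3]]].
have [PLu0 PRv0] := He huv.
case: (shortenP h1) h2 => p' g1 g2 g3.
case/lastP: p' g1 g2 g3 => [|q z] g1 g2 g3 //.
rewrite last_rcons => ez; subst z.
rewrite rcons_path in g1; case/andP: g1 => g1 /rbP [g4 g5].
move: g2; rewrite -rcons_cons rcons_uniq => /andP[nv0 _].
set y := last (inl u0) q in g4 g5.
have [u1 [ey ev1]] : exists u1, y = inl u1 /\ e u1 v0.
  by case: y g4 g5 => // u1 g4 g5; exists u1.
have neq : u1 != u0.
  by apply/eqP => equ; apply: g5; left; rewrite ey equ.
have Pq : forall z, z \in q -> sumP PL PR z.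
  by move=> z zq; apply: h3; apply: g3; rewrite mem_rcons inE zq orbT.
have cq : conn (PGav v0) (bip e) (inl u1) (inl u0).
  apply: (conn_sym (x := inl u0)); first exact: bip_sym.
    by split.
  exists q; split; first by apply: sub_path g1 => s t /rbP [hst _]; apply/rbP.
  split; first by rewrite -ey.
  move=> z zq; split; first exact: Pq.
  by move=> zv; move: nv0; rewrite -zv in_cons zq orbT.
pose Q := fun z : U + V => match z with
  | inl u => conn (PGl v0) (bip e') (inl u0) (inl u)
  | inr v => v <> v0 -> exists u, e u v /\ conn (PGl v0) (bip e') (inl u0) (inl u) end.
have Qu1 : Q (inl u1).
  apply: (conn_ind (Q := Q)) cq _ _; first exact: conn_refl.
  case=> [u|v] [u'|v'] //= hb [Pb nb] Qb.
    have [u2 [eu2 c2]] := Qb (fun h => nb (congr1 inr h)).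
    apply: conn_trans c2 _.
    apply: (conn_mono (Q := fun _ => True)) (hT v' (He hb).2 (inl u2) (inl u) _ _) _ _ _ _ => //.
    - by split=> //; case: (He eu2).
    - by split=> //; case: (He hb).
    - by case=> [u3|x3] /= [h1' h2']; split=> // x4 [<-]; rewrite h2' => hh; apply: nb; rewrite hh.
  by move=> nv; exists u'.
have cT := hT v0 PRv0 (inl u1) (inl u0) (conj (He ev1).1 ev1) (conj PLu0 huv).
case: cT => [t [k1 [k2 k3]]].
case: (shortenP k1) k2 => t' l1 l2 l3.
case/lastP: t' l1 l2 l3 => [|r z] l1 l2 l3.
  by move=> /= [] equ; move: neq; rewrite equ eqxx.
rewrite last_rcons => ez; subst z.
rewrite rcons_path in l1; case/andP: l1 => l1 /rbP l4.
move: l2; rewrite -rcons_cons rcons_uniq => /andP[nu0 _].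
have ymem : last (inl u1) r \in inl u1 :: r by apply: mem_last.
case ey': (last (inl u1) r) l4 ymem => [u3|x'] //= l4 ymem.
have x'r : inr x' \in r by move: ymem; rewrite inE.
have [PRx' px'] : PT v0 (inr x') by apply: k3; apply: l3; rewrite mem_rcons inE x'r orbT.
apply: (hac (inl u0) (inr x') PLu0 PRx' l4).
apply: (conn_trans (y := inl u1)).
  apply: (conn_mono (Q := fun z => z <> inr x')) Qu1 _ _ _ _ => //.
  - by move=> z [_ hz] zx; apply: (hz x') => //.
  - move=> a b Qa Qb hab; split=> // -[[_ bx]|[ax _]] //.
  - by move=> z [].
have Pr : forall z, z \in r -> PT v0 z /\ z <> inl u0.
  move=> z zr; split; first by apply: k3; apply: l3; rewrite mem_rcons inE zr orbT.
  by move=> zu; move: nu0; rewrite -zu in_cons zr orbT.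
have cr : conn (fun z => PT v0 z /\ z <> inl u0) (bip e') (inl u1) (inr x').
  by exists r; split=> //; split.
apply: (conn_mono (Q := fun z => z <> inl u0)) cr _ _ _ _.
- by move=> [equ]; move: neq; rewrite equ eqxx.
- by move=> z [].
- move=> a b Qa Qb hab; split=> // -[[au _]|[_ bu]] //.
- by move=> z [/PT_PG'].
Qed.

Lemma glue_up : treeB (sumP PL PR) (bip e) ->
  (forall v, PR v -> (forall y z, PT v y -> PT v z -> conn (PT v) (bip e') y z) /\
                     acycB (PT v) (bip e')) ->
  treeB (sumP PL PR') (bip e').
Proof.
move=> [[z Pz] [hc ha]] hT; split.
  case: z Pz => [u|v] Pz; first by exists (inl u).
  by have [x [h _]] := Hsurj Pz; exists (inr x).
split; first by apply: glue_conn => // v /hT [].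
by apply: glue_acyc => // v /hT [].
Qed.

Lemma glue_down : treeB (sumP PL PR') (bip e') ->
  (forall v, PR v -> forall y z, PT v y -> PT v z -> conn (PT v) (bip e') y z) ->
  treeB (sumP PL PR) (bip e).
Proof.
move=> [[z Pz] [hc ha]] hT; split; first by exists (fproj z); apply: PG_fproj.
by split; [apply: glue_down_conn | apply: glue_down_acyc].
Qed.

End Glue.

Import GRing.Theory.

Section Lang.
Variable A : finType.
Implicit Types (X : config A -> Prop) (x : config A).

Lemma size_factor_at x i n : size (factor_at x i n) = n.
Proof. by rewrite /factor_at size_map size_iota. Qed.

Lemma factor_at_cat x i a b :
  factor_at x i (a + b) = factor_at x i a ++ factor_at x (i + a%:Z)%R b.
Proof.
rewrite /factor_at iotaD map_cat; congr (_ ++ _).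
have -> : iota (0 + a) b = map (addn a) (iota 0 b) by rewrite -iotaDl addn0.
rewrite -map_comp; apply: eq_map => j /=.
by congr x; rewrite PoszD addrA.
Qed.

Lemma lang_sub X s t r : lang X (s ++ t ++ r) -> lang X t.
Proof.
case=> x [Xx [i h]]; exists x; split=> //; exists (i + (size s)%:Z)%R.
move: h; rewrite !size_cat factor_at_cat factor_at_cat => h.
have h1 := congr1 (drop (size s)) h.
rewrite !drop_size_cat ?size_factor_at // in h1.
have h2 := congr1 (take (size t)) h1.
by rewrite !take_size_cat ?size_factor_at // in h2.
Qed.

Lemma lang_prefix X s t : lang X (s ++ t) -> lang X s.
Proof. by move=> h; apply: (@lang_sub X [::] s t). Qed.

Lemma lang_suffix X s t : lang X (s ++ t) -> lang X t.
Proof. by move=> h; apply: (@lang_sub X s t [::]); rewrite cats0. Qed.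

Lemma lang_ext X s j : lang X s -> exists b, size b = j /\ lang X (s ++ b).
Proof.
case=> x [Xx [i h]]; exists (factor_at x (i + (size s)%:Z)%R j).
split; first exact: size_factor_at.
exists x; split=> //; exists i.
by rewrite size_cat size_factor_at factor_at_cat -h.
Qed.

Lemma rev_map_iota (T : Type) (f : nat -> T) n :
  rev (map f (iota 0 n)) = map (fun j => f (n.-1 - j)) (iota 0 n).
Proof.
elim: n => [|n IH] //.
rewrite [in LHS](_ : iota 0 n.+1 = iota 0 n ++ [:: n]); last by rewrite -addn1 iotaD.
rewrite map_cat rev_cat IH /= subn0; congr (_ :: _).
have -> : iota 1 n = map (addn 1) (iota 0 n) by rewrite -iotaDl addn0.
rewrite -map_comp; apply: eq_map => j /=.
by congr f; lia.
Qed.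

Lemma factor_at_rev x i n :
  rev (factor_at x i n) = factor_at (fun j => x (- j)%R) (- (i + (n.-1)%:Z))%R n.
Proof.
rewrite /factor_at rev_map_iota; apply/eq_in_map => j; rewrite mem_iota add0n => /andP[_ jn].
congr x; lia.
Qed.

End Lang.

Import GRing.Theory.

Section Ext.
Variable A : finType.
Implicit Types (X : config A -> Prop).

Definition eE X k l (w u v : seq A) :=
  Lext X k w u /\ Rext X l w v /\ lang X (u ++ w ++ v).
Definition treeE X k l (w : seq A) :=
  treeB (sumP (Lext X k w) (Rext X l w)) (bip (eE X k l w)).

Lemma ext_tree_iff X n w : ext_graph_is_tree X n w <-> treeE X n n w.
Proof.
exact: (@is_tree_iff _ (sumP (Lext X n w) (Rext X n w)) (bip (eE X n n w))
          (@bip_sym _ _ _) (@bip_irr _ _ _)).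
Qed.

Lemma Rext_take X j l w x : j <= l -> Rext X l w x -> Rext X j w (take j x).
Proof.
move=> jl [sx [lx lwx]]; split; first by rewrite size_takel // sx.
split; apply: (@lang_prefix _ X _ (drop j x)); first by rewrite cat_take_drop.
by rewrite -catA cat_take_drop.
Qed.

Lemma Rext_ext X j d w v : Rext X j w v -> exists x, Rext X (j + d) w x /\ take j x = v.
Proof.
case=> [sv [lv lwv]]; have [b [sb lb]] := lang_ext d lwv.
exists (v ++ b); split; last by rewrite take_size_cat.
split; first by rewrite size_cat sv sb.
by split; [apply: (@lang_suffix _ X w); rewrite catA | rewrite catA].
Qed.

Lemma eE_take X k j l w u x : j <= l -> eE X k l w u x -> eE X k j w u (take j x).
Proof.
move=> jl [Lu [Rx h]]; split=> //; split; first exact: Rext_take Rx.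
by apply: (@lang_prefix _ X _ (drop j x)); rewrite -!catA cat_take_drop.
Qed.

Section Inst.
Variables (X : config A -> Prop) (k l : nat) (w : seq A).

Lemma iHe u v : eE X k l w u v -> Lext X k w u /\ Rext X l w v.
Proof. by case=> [h1 [h2 _]]. Qed.

Lemma iHe' u x : eE X k l.+1 w u x ->
  Lext X k w u /\ Rext X l.+1 w x /\ eE X k l w u (take l x).
Proof. by move=> h; case: (h) => [h1 [h2 _]]; split=> //; split=> //; apply: eE_take h. Qed.

Lemma iHR' x : Rext X l.+1 w x -> Rext X l w (take l x).
Proof. exact: Rext_take. Qed.

Lemma iHsurj v : Rext X l w v -> exists x, Rext X l.+1 w x /\ take l x = v.
Proof. by move=> h; have := Rext_ext 1 h; rewrite addn1. Qed.

Variable v : seq A.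
Hypothesis Rv : Rext X l w v.

Lemma F1 u : Lext X k (w ++ v) u -> Lext X k w u /\ eE X k l w u v.
Proof.
case=> [su [lu luwv]]; have Lu : Lext X k w u.
  by split=> //; split=> //; apply: (@lang_prefix _ X _ v); rewrite -catA.
by split=> //; split=> //; split.
Qed.

Lemma F2 b : Rext X 1 (w ++ v) b -> Rext X l.+1 w (v ++ b) /\ take l (v ++ b) = v.
Proof.
case: Rv => [sv _] [sb [lb lwvb]]; split; last by rewrite take_size_cat.
split; first by rewrite size_cat sv sb addn1.
by split; [apply: (@lang_suffix _ X w); rewrite catA | rewrite catA].
Qed.

Lemma F3 u : Lext X k w u -> eE X k l w u v -> Lext X k (w ++ v) u.
Proof. by case=> [su [lu _]] [_ [_ h]]; split=> //; split. Qed.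

Lemma F4 x : Rext X l.+1 w x -> take l x = v -> Rext X 1 (w ++ v) (drop l x).
Proof.
case=> [sx [lx lwx]] tx; split; first by rewrite size_drop sx subSnn.
split; first by apply: (@lang_suffix _ X (take l x)); rewrite cat_take_drop.
by rewrite -tx -catA cat_take_drop.
Qed.

Lemma F5 u b : eE X k 1 (w ++ v) u b -> eE X k l.+1 w u (v ++ b).
Proof.
case=> [Lu [Rb h]]; have [Lu' _] := F1 Lu; have [Rvb _] := F2 Rb.
by split=> //; split=> //; move: h; rewrite !catA.
Qed.

Lemma F6 u x : eE X k l.+1 w u x -> take l x = v -> eE X k 1 (w ++ v) u (drop l x).
Proof.
case=> [Lu [Rx h]] tx; have xe : x = v ++ drop l x by rewrite -tx cat_take_drop.
split.
  case: (Lu) => [su [lu _]]; split=> //; split=> //.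
  by apply: (@lang_prefix _ X _ (drop l x)); move: h; rewrite {1}xe !catA.
split; first exact: F4.
by move: h; rewrite {1}xe !catA.
Qed.

Definition phiR (z : seq A + seq A) : seq A + seq A :=
  match z with inl u => inl u | inr b => inr (v ++ b) end.
Definition psiR (z : seq A + seq A) : seq A + seq A :=
  match z with inl u => inl u | inr x => inr (drop l x) end.

Lemma T_conn :
  (forall x y, sumP (Lext X k (w ++ v)) (Rext X 1 (w ++ v)) x ->
               sumP (Lext X k (w ++ v)) (Rext X 1 (w ++ v)) y ->
     conn (sumP (Lext X k (w ++ v)) (Rext X 1 (w ++ v))) (bip (eE X k 1 (w ++ v))) x y) ->
  forall y z, PT (Lext X k w) (eE X k l w) (Rext X l.+1 w) (take l) v y ->
              PT (Lext X k w) (eE X k l w) (Rext X l.+1 w) (take l) v z ->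
  conn (PT (Lext X k w) (eE X k l w) (Rext X l.+1 w) (take l) v) (bip (eE X k l.+1 w)) y z.
Proof.
apply: (connected_hom (f := phiR)).
- by case=> [u|b] /=; [move/F1 | move/F2].
- by case=> [u|b] [u'|b'] //= _ _ /F5.
- case=> [u|x] /= [h1 h2]; first by exists (inl u); split=> //; apply: F3.
  exists (inr (drop l x)); split; first exact: F4.
  by rewrite /= -h2 cat_take_drop.
Qed.

Lemma T_acyc :
  acycB (sumP (Lext X k (w ++ v)) (Rext X 1 (w ++ v))) (bip (eE X k 1 (w ++ v))) ->
  acycB (PT (Lext X k w) (eE X k l w) (Rext X l.+1 w) (take l) v) (bip (eE X k l.+1 w)).
Proof.
apply: (acycB_hom (f := psiR)).
- by case=> [u|x] /= [h1 h2]; [apply: F3 | apply: F4].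
- case=> [u|x] [u'|x'] //= Pa Pb h.
    by case: Pb => _ tx; apply: F6.
  by case: Pa => _ tx; apply: F6.
- case=> [u|x] [u'|x'] /= Pa Pb eqd; try discriminate; first by case: eqd => ->.
  have h : drop l x = drop l x' by case: eqd.
  case: Pa Pb => [_ tx] [_ tx'].
  by rewrite -(cat_take_drop l x) -(cat_take_drop l x') tx tx' h.
Qed.

End Inst.

Lemma proj_conn X k l x :
  (forall a b, sumP (Lext X k x) (Rext X l.+1 x) a -> sumP (Lext X k x) (Rext X l.+1 x) b ->
     conn (sumP (Lext X k x) (Rext X l.+1 x)) (bip (eE X k l.+1 x)) a b) ->
  (forall a b, sumP (Lext X k x) (Rext X 1 x) a -> sumP (Lext X k x) (Rext X 1 x) b ->
     conn (sumP (Lext X k x) (Rext X 1 x)) (bip (eE X k 1 x)) a b).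
Proof.
apply: (connected_hom (f := fun z => match z with inl u => inl u | inr y => inr (take 1 y) end)).
- by case=> [u|y] //= Ry; apply: Rext_take Ry.
- by case=> [u|y] [u'|y'] //= _ _ h; apply: eE_take h.
- case=> [u|b] /= h; first by exists (inl u).
  have [y [Ry ty]] := Rext_ext l h.
  by exists (inr y); split=> //; rewrite /= ty.
Qed.

Definition TT X m k l := forall w, lang X w -> m <= size w -> treeE X k l w.

Lemma R_up X m k l : TT X m k l -> TT X m k 1 -> TT X m k l.+1.
Proof.
move=> h h1 w Lw mw.
apply: (glue_up (pi := take l) (@iHe X k l w) (@iHe' X k l w) (@iHR' X l w)
          (@iHsurj X l w) (h w Lw mw)) => v Rv.
have Lwv : lang X (w ++ v) by case: Rv => [_ []].
have mwv : m <= size (w ++ v) by rewrite size_cat; apply: leq_trans mw (leq_addr _ _).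
have [_ [hc ha]] := h1 (w ++ v) Lwv mwv.
by split; [exact: T_conn Rv hc | exact: T_acyc ha].
Qed.

Lemma R_down X m k l : TT X m k l.+1 -> TT X m k l.
Proof.
move=> h w Lw mw.
apply: (glue_down (pi := take l) (@iHe X k l w) (@iHe' X k l w) (@iHR' X l w)
          (@iHsurj X l w) (h w Lw mw)) => v Rv.
have Lwv : lang X (w ++ v) by case: Rv => [_ []].
have mwv : m <= size (w ++ v) by rewrite size_cat; apply: leq_trans mw (leq_addr _ _).
have [_ [hc _]] := h (w ++ v) Lwv mwv.
exact: T_conn Rv (proj_conn hc).
Qed.

End Ext.

Import GRing.Theory.

Section Rev.
Variable A : finType.
Implicit Types (X : config A -> Prop).

Definition Xr X : config A -> Prop := fun x => X (fun i => x (- i)%R).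

Lemma lang_rev X s : lang (Xr X) s <-> lang X (rev s).
Proof.
split.
  case=> x [Xx [i h]]; exists (fun j => x (- j)%R); split=> //.
  exists (- (i + ((size s).-1)%:Z))%R.
  by rewrite size_rev {1}h factor_at_rev.
case=> y [Xy [i h]]; exists (fun j => y (- j)%R); split.
  rewrite /Xr; have -> : (fun i0 => y (- - i0)%R) = y.
    by apply: functional_extensionality => j; rewrite opprK.
  exact: Xy.
exists (- (i + ((size s).-1)%:Z))%R.
rewrite size_rev in h.
by rewrite -[s in LHS]revK h factor_at_rev.
Qed.

Lemma lang_revK X s : lang (Xr X) (rev s) <-> lang X s.
Proof. by rewrite -{2}(revK s); apply: lang_rev. Qed.

Lemma Lrev X k w u : Lext X k w u <-> Rext (Xr X) k (rev w) (rev u).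
Proof.
rewrite /Lext /Rext size_rev -rev_cat; split.
  by case=> [h1 [h2 h3]]; split=> //; split; apply/lang_revK.
by case=> [h1 [h2 h3]]; split=> //; split; apply/lang_revK.
Qed.

Lemma Rrev X l w v : Rext X l w v <-> Lext (Xr X) l (rev w) (rev v).
Proof.
rewrite /Lext /Rext size_rev -rev_cat; split.
  by case=> [h1 [h2 h3]]; split=> //; split; apply/lang_revK.
by case=> [h1 [h2 h3]]; split=> //; split; apply/lang_revK.
Qed.

Lemma Erev X k l w u v : eE X k l w u v <-> eE (Xr X) l k (rev w) (rev v) (rev u).
Proof.
rewrite /eE (_ : rev v ++ rev w ++ rev u = rev (u ++ w ++ v)); last by rewrite !rev_cat catA.
split.
  by case=> [h1 [h2 h3]]; split; [apply/Rrev | split; [apply/Lrev | apply/lang_revK]].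
by case=> [h1 [h2 h3]]; split; [apply/Lrev | split; [apply/Rrev | apply/lang_revK]].
Qed.

Definition rho (z : seq A + seq A) : seq A + seq A :=
  match z with inl u => inr (rev u) | inr v => inl (rev v) end.

Lemma rhoK z : rho (rho z) = z.
Proof. by case: z => s /=; rewrite revK. Qed.

Lemma rhoP X k l w z : sumP (Lext X k w) (Rext X l w) z ->
  sumP (Lext (Xr X) l (rev w)) (Rext (Xr X) k (rev w)) (rho z).
Proof. by case: z => s /=; [move/Lrev | move/Rrev]. Qed.

Lemma rhoP' X k l w z : sumP (Lext (Xr X) l (rev w)) (Rext (Xr X) k (rev w)) z ->
  sumP (Lext X k w) (Rext X l w) (rho z).
Proof. by case: z => s /= h; [apply/Rrev | apply/Lrev]; rewrite revK. Qed.

Lemma rhoE X k l w a b : bip (eE X k l w) a b ->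
  bip (eE (Xr X) l k (rev w)) (rho a) (rho b).
Proof. by case: a => s; case: b => t //= /Erev. Qed.

Lemma rhoE' X k l w a b : bip (eE (Xr X) l k (rev w)) a b ->
  bip (eE X k l w) (rho a) (rho b).
Proof. by case: a => s; case: b => t //= h; apply/Erev; rewrite !revK. Qed.

Lemma rho_inj a b : rho a = rho b -> a = b.
Proof. by move=> h; rewrite -(rhoK a) h rhoK. Qed.

Lemma treeE_rev X k l w : treeE X k l w -> treeE (Xr X) l k (rev w).
Proof.
apply: (treeB_transfer (f := rho) (g := rho)).
- exact: rhoP.
- by move=> a b _ _; apply: rhoE.
- by move=> z h; exists (rho z); split; [apply: rhoP' | rewrite rhoK].
- exact: rhoP'.
- by move=> a b _ _; apply: rhoE'.
- by move=> a b _ _; apply: rho_inj.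
Qed.

Lemma treeE_unrev X k l w : treeE (Xr X) l k (rev w) -> treeE X k l w.
Proof.
apply: (treeB_transfer (f := rho) (g := rho)).
- exact: rhoP'.
- by move=> a b _ _; apply: rhoE'.
- by move=> z h; exists (rho z); split; [apply: rhoP | rewrite rhoK].
- exact: rhoP.
- by move=> a b _ _; apply: rhoE.
- by move=> a b _ _; apply: rho_inj.
Qed.

Lemma TT_rev X m k l : TT X m k l -> TT (Xr X) m l k.
Proof.
move=> h w Lw mw; rewrite -[w]revK; apply: treeE_rev; apply: h.
  exact/lang_rev.
by rewrite size_rev.
Qed.

Lemma TT_unrev X m k l : TT (Xr X) m l k -> TT X m k l.
Proof.
move=> h w Lw mw; apply: treeE_unrev; apply: h.
  exact/lang_revK.
by rewrite size_rev.
Qed.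

Lemma L_up X m k l : TT X m k l -> TT X m 1 l -> TT X m k.+1 l.
Proof. by move=> h h1; apply: TT_unrev; apply: R_up; apply: TT_rev. Qed.

Lemma L_down X m k l : TT X m k.+1 l -> TT X m k l.
Proof. by move=> h; apply: TT_unrev; apply: R_down; apply: TT_rev. Qed.

Lemma down_11 X m n : 1 <= n -> TT X m n n -> TT X m 1 1.
Proof.
case: n => // n _ h.
have hr : forall d, TT X m n.+1 d.+1 -> TT X m n.+1 1.
  by elim=> [|d IH] // hd; apply: IH; apply: R_down.
have hl : forall d, TT X m d.+1 1 -> TT X m 1 1.
  by elim=> [|d IH] // hd; apply: IH; apply: L_down.
exact: hl (hr _ h).
Qed.

Lemma up_11 X m k l : TT X m 1 1 -> TT X m k.+1 l.+1.
Proof.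
move=> h11.
have hr : forall d, TT X m 1 d.+1.
  by elim=> [|d IH] //; apply: R_up.
elim: k => [|k IH]; first exact: hr.
exact: L_up IH (hr l).
Qed.

End Rev.

Theorem mainTheorem16 (A : finType) (X : config A -> Prop) (n m : nat) :
  shift_space X -> 1 <= n ->
  ((forall w : seq A, lang X w -> m <= size w -> ext_graph_is_tree X n w) <->
   (forall w : seq A, lang X w -> m <= size w -> ext_graph_is_tree X n.+1 w)).
Proof.
move=> _ n1; case: n n1 => // n _; split=> h w Lw mw; apply/ext_tree_iff.
  have h11 : TT X m 1 1.
    apply: (@down_11 _ X m n.+1) => // w' Lw' mw'; exact/ext_tree_iff/h.
  exact: (up_11 n.+1 n.+1 h11).
have h11 : TT X m 1 1.
  apply: (@down_11 _ X m n.+2) => // w' Lw' mw'; exact/ext_tree_iff/h.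
exact: (up_11 n n h11).
Qed.
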